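(* Let $\rho$ be an $N\times N$ density matrix with eigenvalue vector $\lambda$ (nonnegative entries summing to one). Let $\{|i\rangle\}_{i=1}^N$ and $\{|a_i\rangle\}_{i=1}^N$ be orthonormal bases of $\mathbb{C}^N$, and let $p_i=\langle i|\rho|i\rangle$, $q_i=\langle a_i|\rho|a_i\rangle$. Let $1\le m,n\le N$ and let $A$ be the $n\times m$ matrix with entries $A_{ij}=\langle a_i|j\rangle$ ($1\le i\le n$, $1\le j\le m$). Define $\mu\in\mathbb{R}^{m+n}$ by $\mu=(1,1,\dots,1)+\big(\sigma(A)\oplus(-\sigma(A))\big)$, where $\sigma(A)$ is the vector of singular values of $A$, $\oplus$ denotes concatenation, and $\sigma(A)\oplus(-\sigma(A))$ is extended by zeros to length $m+n$. Then $$p_1+\dots+p_m+q_1+\dots+q_n\le\lambda^{\downarrow}\cdot\mu^{\downarrow},$$ where $x^\downarrow$ denotes the nonincreasing rearrangement of $x$, $\cdot$ is the standard scalar product, and the shorter of the two vectors is padded with zeros. *)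

(* Defs.v *)
From HB Require Import structures.
From mathcomp Require Import all_boot all_order all_algebra.
Set Implicit Arguments. Unset Strict Implicit. Unset Printing Implicit Defensive.
Import Order.TTheory GRing.Theory Num.Theory.
Local Open Scope ring_scope.

Section Defs.
Variable C : numClosedFieldType.

(* Kets are represented by their coordinate vectors, written as row vectors.
   braket u M v = <u| M |v> = sum_{j,k} conj(u_j) M_{jk} v_k. *)
Definition braket N (u : 'rV[C]_N) (M : 'M[C]_N) (v : 'rV[C]_N) : C :=
  ((map_mx Num.conj u) *m M *m v^T) 0 0.

Definition ip N (u v : 'rV[C]_N) : C := ((map_mx Num.conj u) *m v^T) 0 0.

Definition adj_mx m n (A : 'M[C]_(m, n)) : 'M[C]_(n, m) := (map_mx Num.conj A)^T.

Definition density_matrix N (rho : 'M[C]_N) : Prop :=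
  [/\ adj_mx rho = rho, forall v : 'rV[C]_N, 0 <= braket v rho v & \tr rho = 1].

(* the rows of E form an orthonormal basis of C^N *)
Definition orthonormal_basis N (E : 'M[C]_N) : Prop := E *m adj_mx E = 1%:M.

Definition eigenvalue_vector N (M : 'M[C]_N) (lam : 'I_N -> C) : Prop :=
  char_poly M = \prod_(i < N) ('X - (lam i)%:P).

(* sig lists the singular values of A (n x m): the square roots of the
   minn m n (largest) eigenvalues of A^* A, the other m - minn m n being 0 *)
Definition singular_values n m (A : 'M[C]_(n, m)) (sig : 'I_(minn m n) -> C) : Prop :=
  (forall k, 0 <= sig k) /\
  char_poly (adj_mx A *m A) = 'X^(m - minn m n) * \prod_(k < minn m n) ('X - (sig k ^+ 2)%:P).

Definition decr (s : seq C) : seq C := sort (fun x y => y <= x) s.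

Definition sdot (s t : seq C) : C :=
  \sum_(i < size s + size t) nth 0 s i * nth 0 t i.

End Defs.

(* Main.v *)
Require Import Defs.
From HB Require Import structures.
From mathcomp Require Import all_boot all_order all_algebra.
From mathcomp Require Import perm ring zify.
Import Order.TTheory GRing.Theory Num.Theory.
Local Open Scope ring_scope.

Section Comb.
Set Implicit Arguments.
Variable C : numClosedFieldType.

Lemma sum_w_le (N t : nat) (w : 'I_N -> C) (b : nat -> C) :
  (forall k, 0 <= w k <= 1) -> \sum_k w k <= t%:R ->
  (forall i j, (i <= j)%N -> b j <= b i) -> (forall i, 0 <= b i) ->
  (forall k, (N <= k)%N -> b k = 0) ->
  \sum_(k < N) w k * b k <= \sum_(k < t) b k.
Proof.
move=> hw hsw hdec hb0 hbN.
set c := b t.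
have h1 : \sum_(k < N) w k * b k <=
   \sum_(k < N) (w k * c + (if (k < t)%N then b k - c else 0)).
  apply: ler_sum => k _; have /andP[w0 w1] := hw k.
  case: ifP => hkt.
    rewrite -subr_ge0.
    have -> : w k * c + (b k - c) - w k * b k = (1 - w k) * (b k - c) by ring.
    by apply: mulr_ge0; rewrite subr_ge0 //; apply: hdec; apply: ltnW.
  rewrite addr0; apply: ler_wpM2l => //; apply: hdec.
  by rewrite leqNgt hkt.
apply: (le_trans h1); rewrite big_split /= -big_mkcond /= -mulr_suml.
have hc0 : 0 <= c := hb0 t.
case: (leqP t N) => htN.
  rewrite -(big_ord_widen N (fun k => b k - c) htN) sumrB sumr_const card_ord.
  have h2 : (\sum_(i < N) w i) * c <= c *+ t.
    by rewrite -mulr_natr [_ * c]mulrC; exact: (ler_wpM2l hc0 hsw).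
  by apply: le_trans (lerD h2 (lexx _)) _; rewrite addrC subrK.
have c0 : c = 0 by apply: hbN; apply: ltnW.
rewrite c0 mulr0 add0r.
under eq_bigr do rewrite subr0.
rewrite [X in X <= _](eq_bigl (fun _ => true)) => [|i /=]; last first.
  by rewrite (ltn_trans (ltn_ord i) htN).
rewrite (big_ord_widen t (fun k => b k) (ltnW htN)).
rewrite [X in X <= _]big_mkcond /=.
by apply: ler_sum => k _; case: ifP.
Qed.

Lemma abel_id (a d : nat -> C) (n : nat) :
  \sum_(i < n) a i * d i =
  \sum_(i < n) (a i - a i.+1) * (\sum_(j < i.+1) d j) + a n * \sum_(j < n) d j.
Proof.
elim: n => [|n IH]; first by rewrite !big_ord0 mulr0 addr0.
rewrite big_ord_recr /= IH big_ord_recr /= (big_ord_recr n) /=.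
ring.
Qed.

Lemma abel (M : nat) (a x y : nat -> C) :
  (forall i, a i.+1 <= a i) -> (forall i, 0 <= a i) ->
  (forall t, (t <= M)%N -> \sum_(i < t) x i <= \sum_(i < t) y i) ->
  \sum_(i < M) a i * x i <= \sum_(i < M) a i * y i.
Proof.
move=> hdec ha hxy; rewrite -subr_ge0 -sumrB.
under eq_bigr do rewrite -mulrBr.
rewrite (abel_id a (fun i => y i - x i)); apply: addr_ge0.
  apply: sumr_ge0 => i _; apply: mulr_ge0; first by rewrite subr_ge0.
  by rewrite sumrB subr_ge0; apply: hxy.
by apply: mulr_ge0 => //; rewrite sumrB subr_ge0; apply: hxy.
Qed.


Lemma core_sorted M N (S : 'I_M -> 'I_N -> C) (a b : nat -> C) :
  (forall i j, (i <= j)%N -> a j <= a i) -> (forall i, 0 <= a i) ->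
  (forall i, (M <= i)%N -> a i = 0) ->
  (forall i j, (i <= j)%N -> b j <= b i) -> (forall i, 0 <= b i) ->
  (forall i, (N <= i)%N -> b i = 0) ->
  (forall i k, 0 <= S i k) -> (forall i, \sum_k S i k <= 1) ->
  (forall k, \sum_i S i k <= 1) ->
  \sum_(i < M) \sum_(k < N) a i * S i k * b k <= \sum_(i < M + N) a i * b i.
Proof.
move=> hadec ha0 haM hbdec hb0 hbN hS hrow hcol.
pose beta := fun i : 'I_M => \sum_k S i k * b k.
pose x := fun i : nat => oapp beta 0 (insub i).
have hx : forall i : 'I_M, x i = beta i by move=> i; rewrite /x valK.
have -> : \sum_(i < M) \sum_(k < N) a i * S i k * b k = \sum_(i<M) a i * x i.
  apply: eq_bigr => i _; rewrite hx /beta mulr_sumr.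
  by apply: eq_bigr => k _; rewrite mulrA.
apply: (@le_trans _ _ (\sum_(i < M) a i * b i)).
  apply: abel => //; first by move=> i; apply: hadec.
  move=> t ht.
  rewrite (big_ord_widen M x ht).
  under eq_bigr do rewrite hx /beta.
  rewrite exchange_big /=.
  under eq_bigr do rewrite -mulr_suml.
  apply: sum_w_le => //.
    move=> k; apply/andP; split; first by apply: sumr_ge0.
    apply: le_trans (hcol k).
    rewrite [X in _ <= X](bigID (fun i : 'I_M => (i < t)%N)) /= lerDl.
    by apply: sumr_ge0.
  rewrite exchange_big /=.
  apply: (@le_trans _ _ (\sum_(i < M | (i < t)%N) 1)).
    by apply: ler_sum => i _; apply: hrow.
  by rewrite -(big_ord_widen M (fun _ => (1:C)) ht) sumr_const card_ord.
rewrite (big_ord_widen (M + N) (fun i => a i * b i) (leq_addr N M)) big_mkcond.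
apply: ler_sum => i _; case: ifP => // _.
by apply: mulr_ge0.
Qed.


Lemma getperm M (f : 'I_M -> C) (s : seq C) :
  perm_eq s [seq f i | i <- enum 'I_M] ->
  exists p : 'S_M, forall i : 'I_M, nth 0 s i = f (p i).
Proof.
move=> h.
have : perm_eq s [tuple f i | i < M].
  by rewrite (_ : val [tuple f i | i < M] = map f (val (ord_tuple M))) // val_ord_tuple.
case/tuple_permP => p hp; exists p => i.
by rewrite hp -(tnth_nth 0) !tnth_mktuple.
Qed.

Lemma sorted_props M (s : seq C) (f : 'I_M -> C) :
  (forall i, 0 <= f i) ->
  perm_eq s [seq f i | i <- enum 'I_M] -> sorted (fun x y => y <= x) s ->
  [/\ size s = M, (forall i, 0 <= nth 0 s i),
      (forall i, (M <= i)%N -> nth 0 s i = 0) &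
      (forall i j, (i <= j)%N -> nth 0 s j <= nth 0 s i)].
Proof.
move=> hf hp hs.
have sz : size s = M by rewrite (perm_size hp) size_map size_enum_ord.
have [p hp'] := @getperm _ _ _ hp.
have nn : forall i, 0 <= nth 0 s i.
  move=> i; case: (ltnP i M) => h; first by rewrite (hp' (Ordinal h)).
  by rewrite nth_default ?sz.
split => //; first by move=> i h; rewrite nth_default ?sz.
move=> i j hij; case: (ltnP j M) => hj.
  have tr : transitive (fun x y : C => y <= x).
    by move=> y x z h1 h2; apply: le_trans h2 h1.
  apply: (sorted_leq_nth tr (fun x => lexx x) 0 hs) => //.
    by rewrite inE sz (leq_ltn_trans hij hj).
  by rewrite inE sz.
by rewrite (nth_default 0 (s:=s)) ?sz.
Qed.

Lemma core M N (a : 'I_M -> C) (b : 'I_N -> C) (S : 'I_M -> 'I_N -> C)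
  (sa sb : seq C) :
  (forall i, 0 <= a i) -> (forall k, 0 <= b k) -> (forall i k, 0 <= S i k) ->
  (forall i, \sum_k S i k <= 1) -> (forall k, \sum_i S i k <= 1) ->
  perm_eq sa [seq a i | i <- enum 'I_M] -> sorted (fun x y => y <= x) sa ->
  perm_eq sb [seq b i | i <- enum 'I_N] -> sorted (fun x y => y <= x) sb ->
  \sum_i \sum_k a i * S i k * b k <= sdot sa sb.
Proof.
move=> ha hb hS hrow hcol hpa hsa hpb hsb.
have [sza nna za deca] := @sorted_props _ _ _ ha hpa hsa.
have [szb nnb zb decb] := @sorted_props _ _ _ hb hpb hsb.
have [pa ea] := @getperm _ _ _ hpa; have [pb eb] := @getperm _ _ _ hpb.
rewrite (reindex_inj (@perm_inj _ pa)) /=.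
under eq_bigr do rewrite (reindex_inj (@perm_inj _ pb)) /=.
under eq_bigr do under eq_bigr do rewrite -ea -eb.
rewrite /sdot sza szb.
apply: (@core_sorted _ _ (fun i k => S (pa i) (pb k))) => //.
  by move=> i; have := hrow (pa i); rewrite (reindex_inj (@perm_inj _ pb)).
by move=> k; have := hcol (pb k); rewrite (reindex_inj (@perm_inj _ pa)).
Qed.

End Comb.

Section Mx.
Set Implicit Arguments.
Variable C : numClosedFieldType.

Lemma adj_adj m n (A : 'M[C]_(m, n)) : adj_mx (adj_mx A) = A.
Proof.
apply/matrixP => i j; by rewrite /adj_mx !mxE conjCK.
Qed.

Lemma adj_mul m n p (A : 'M[C]_(m, n)) (B : 'M[C]_(n, p)) :
  adj_mx (A *m B) = adj_mx B *m adj_mx A.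
Proof. by rewrite /adj_mx map_mxM trmx_mul. Qed.

Lemma adj_tC m n (A : 'M[C]_(m, n)) : adj_mx A = (A ^t Num.conj)%sesqui.
Proof. by rewrite /adj_mx map_trmx. Qed.

Lemma unitary_r n (X : 'M[C]_n) : X \is unitarymx -> X *m adj_mx X = 1%:M.
Proof. by move/unitarymxP; rewrite adj_tC. Qed.

Lemma unitary_l n (X : 'M[C]_n) : X \is unitarymx -> adj_mx X *m X = 1%:M.
Proof.
move=> hX; rewrite adj_tC -invmx_unitary //; apply: mulVmx.
exact: unitarymx_unit.
Qed.

Lemma spectral_decomp n (A : 'M[C]_n) : A *m adj_mx A = adj_mx A *m A ->
  A = adj_mx (spectralmx A) *m diag_mx (spectral_diag A) *m spectralmx A.
Proof.
move=> h; have hn : A \is normalmx by apply/normalmxP; rewrite -!adj_tC.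
by rewrite adj_tC -invmx_unitary ?spectral_unitarymx //; apply/orthomx_spectralP.
Qed.

Lemma char_poly_uconj n (P D : 'M[C]_n) : P \is unitarymx ->
  char_poly (adj_mx P *m D *m P) = char_poly D.
Proof.
move=> hP.
have e : char_poly_mx (adj_mx P *m D *m P) =
  map_mx polyC (adj_mx P) *m char_poly_mx D *m map_mx polyC P.
  rewrite /char_poly_mx mulmxBr mulmxBl -!map_mxM mul_mx_scalar -scalemxAl.
  by rewrite -map_mxM unitary_l // map_mx1 scalemx1.
rewrite /char_poly e !det_mulmx !det_map_mx mulrC mulrA -rmorphM -det_mulmx.
by rewrite unitary_r // det1 rmorph1 mul1r.
Qed.

Lemma spec_perm n (A : 'M[C]_n) (s : seq C) :
  A *m adj_mx A = adj_mx A *m A ->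
  char_poly A = \prod_(x <- s) ('X - x%:P) ->
  perm_eq s [seq spectral_diag A 0 i | i <- enum 'I_n].
Proof.
move=> hn hc; apply: prod_XsubC_eq; rewrite -hc.
rewrite {1}(spectral_decomp hn) char_poly_uconj ?spectral_unitarymx //.
rewrite char_poly_trig ?diag_mx_is_trig // big_map big_enum /=.
by apply: eq_bigr => i _; rewrite mxE eqxx mulr1n.
Qed.

End Mx.

Section Blk.
Set Implicit Arguments.
Variable C : numClosedFieldType.

Lemma cpmx_block m n (A : 'M[C]_(n, m)) :
  char_poly_mx (block_mx 1%:M (adj_mx A) A 1%:M) =
  block_mx ('X - 1)%:M (- map_mx polyC (adj_mx A)) (- map_mx polyC A) ('X - 1)%:M.
Proof.
rewrite /char_poly_mx map_block_mx (scalar_mx_block m n) opp_block_mx add_block_mx.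
by rewrite !sub0r !map_mx1 !(raddfB (@scalar_mx _ _)).
Qed.


Lemma det_block m n (A : 'M[C]_(n, m)) (y : {poly C}) :
  \det (block_mx y%:M (- map_mx polyC (adj_mx A)) (- map_mx polyC A) y%:M)
     * y ^+ (m + n)
  = \det ((y * y)%:M - map_mx polyC (adj_mx A *m A)) * (y * y) ^+ n.
Proof.
set Bs := map_mx polyC (adj_mx A); set Ap := map_mx polyC A.
have e : block_mx y%:M Bs 0 y%:M *m block_mx y%:M (-Bs) (-Ap) y%:M =
   block_mx ((y*y)%:M - Bs *m Ap) 0 (- (y *: Ap)) (y*y)%:M.
  rewrite mulmx_block !mul0mx !add0r !mulmxN !mul_scalar_mx mul_mx_scalar.
  by rewrite !scale_scalar_mx addNr.
have := congr1 determinant e.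
rewrite det_mulmx det_ublock det_lblock !det_scalar => h.
rewrite map_mxM -/Bs -/Ap -h exprD; ring.
Qed.


Lemma det_cp_comp n (M : 'M[C]_n) (q : {poly C}) :
  \det (q%:M - map_mx polyC M) = (char_poly M) \Po q.
Proof.
have e : map_mx (comp_poly q) (char_poly_mx M) = q%:M - map_mx polyC M.
  apply/matrixP => i j; rewrite !mxE rmorphB /= rmorphMn /= comp_polyX.
  by rewrite comp_polyC.
by rewrite -e det_map_mx.
Qed.

Lemma cp_K m n (A : 'M[C]_(n, m)) (sig : 'I_(minn m n) -> C) :
  char_poly (adj_mx A *m A) =
    'X^(m - minn m n) * \prod_(k < minn m n) ('X - (sig k ^+ 2)%:P) ->
  char_poly (block_mx 1%:M (adj_mx A) A 1%:M) =
  \prod_(x <- [seq 1 + sig k | k <- enum 'I_(minn m n)] ++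
    [seq 1 - sig k | k <- enum 'I_(minn m n)] ++
    nseq (m + n - (minn m n + minn m n)) 1) ('X - x%:P).
Proof.
move=> hs; set y : {poly C} := 'X - 1.
have hy : y != 0 by rewrite /y -polyC1 -size_poly_gt0 size_XsubC.
set mu := (X in \prod_(x <- X) _).
have -> : \prod_(x <- mu) ('X - x%:P) =
   \prod_(k < minn m n) ('X - (1 + sig k)%:P) *
   (\prod_(k < minn m n) ('X - (1 - sig k)%:P) *
    ('X - 1%:P) ^+ (m + n - (minn m n + minn m n))).
  by rewrite /mu !enumT !big_cat !big_map -!enumT !big_enum big_nseq iter_mulr mulr1.
apply: (mulIf (expf_neq0 (m + n) hy)).
rewrite /char_poly cpmx_block det_block det_cp_comp hs.
rewrite rmorphM /= rmorphXn /= comp_polyX rmorph_prod /=.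
rewrite polyC1 -/y.
have eL : \prod_(i < minn m n) (('X - (sig i ^+ 2)%:P) \Po (y * y)) =
    \prod_(i < minn m n) (y * y - (sig i ^+ 2)%:P).
  by apply: eq_bigr => i _; rewrite rmorphB /= comp_polyX comp_polyC.
have eR : \prod_(k < minn m n) ('X - (1 + sig k)%:P) *
    \prod_(k < minn m n) ('X - (1 - sig k)%:P) =
    \prod_(i < minn m n) (y * y - (sig i ^+ 2)%:P).
  rewrite -big_split; apply: eq_bigr => i _ /=.
  rewrite /y polyCD polyCB polyC1 rmorphXn /=; ring.
rewrite eL mulrA eR.
set P := \prod_(i < minn m n) _.
rewrite !exprMn -!exprD [_ * P]mulrC -mulrA -exprD -mulrA -exprD.
congr (_ * y ^+ _).
have h1 := geq_minl m n; have h2 := geq_minr m n.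
lia.
Qed.


Lemma sdotC (s t : seq C) : sdot s t = sdot t s.
Proof.
rewrite /sdot addnC; apply: eq_bigr => i _; exact: mulrC.
Qed.

End Blk.
Theorem lemma1 (C : numClosedFieldType) (N : nat) (rho : 'M[C]_N)
  (lam : 'I_N -> C) (E Ab : 'M[C]_N) (m n : nat)
  (hrho : density_matrix rho) (hlam : eigenvalue_vector rho lam)
  (hE : orthonormal_basis E) (hAb : orthonormal_basis Ab)
  (hm1 : (1 <= m)%N) (hmN : (m <= N)%N) (hn1 : (1 <= n)%N) (hnN : (n <= N)%N)
  (sig : 'I_(minn m n) -> C) :
  let p := fun j : 'I_N => braket (row j E) rho (row j E) in
  let q := fun i : 'I_N => braket (row i Ab) rho (row i Ab) in
  let A : 'M[C]_(n, m) :=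
    \matrix_(i < n, j < m) ip (row (widen_ord hnN i) Ab) (row (widen_ord hmN j) E) in
  singular_values A sig ->
  let mu : seq C :=
    [seq 1 + sig k | k <- enum 'I_(minn m n)] ++
    [seq 1 - sig k | k <- enum 'I_(minn m n)] ++
    nseq (m + n - (minn m n + minn m n)) 1 in
  \sum_(j < N | (j < m)%N) p j + \sum_(i < N | (i < n)%N) q i
    <= sdot (decr [seq lam i | i <- enum 'I_N]) (decr mu).
Proof.
move=> p q A hsv; cbv zeta.
set mu := (X in sdot _ (decr X)).
case: hrho => hH hpsd htr.
pose F' : 'M[C]_(m, N) := \matrix_(i, l) (E (widen_ord hmN i) l)^*.
pose G' : 'M[C]_(n, N) := \matrix_(i, l) (Ab (widen_ord hnN i) l)^*.
pose W := col_mx F' G'.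
have trF : forall k (hk : (k <= N)%N) (X : 'M[C]_N),
    \sum_(j < N | (j < k)%N) braket (row j X) rho (row j X) =
    \tr ((\matrix_(i < k, l < N) (X (widen_ord hk i) l)^*) *m rho *m
         adj_mx (\matrix_(i < k, l < N) (X (widen_ord hk i) l)^*)).
  move=> k hk X; rewrite (big_ord_narrow hk) /mxtrace; apply: eq_bigr => i _.
  rewrite /braket !mxE; apply: eq_bigr => j _; rewrite !mxE conjCK.
  congr (_ * _); apply: eq_bigr => l _; by rewrite !mxE.
have step1 : \sum_(j < N | (j < m)%N) p j + \sum_(i < N | (i < n)%N) q i =
    \tr (W *m rho *m adj_mx W).
  rewrite /p /q (trF m hmN) (trF n hnN) -/F' -/G' /W.
  rewrite {3}/adj_mx map_col_mx tr_col_mx mul_col_mx mul_col_row mxtrace_block.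
  done.
have ortho : forall k (hk : (k <= N)%N) (X : 'M[C]_N), orthonormal_basis X ->
    let Y := \matrix_(i < k, l < N) (X (widen_ord hk i) l)^* in
    Y *m adj_mx Y = 1%:M.
  move=> k hk X hX Y; apply/matrixP => i j.
  have := congr1 (fun M : 'M[C]_N => (M (widen_ord hk i) (widen_ord hk j))^*) hX.
  rewrite /= !mxE rmorph_sum /= conjC_nat => h.
  rewrite (_ : (i == j) = (widen_ord hk i == widen_ord hk j)) // -h. apply: eq_bigr => l _; rewrite !mxE rmorphM /= conjCK.
  by rewrite mulrC.
have hGF : G' *m adj_mx F' = A.
  apply/matrixP => i j; rewrite /A /ip !mxE; apply: eq_bigr => l _.
  by rewrite !mxE conjCK.
have hK : W *m adj_mx W = block_mx 1%:M (adj_mx A) A 1%:M.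
  rewrite /W [X in _ *m X = _]/adj_mx map_col_mx tr_col_mx mul_col_row.
  rewrite -!/(adj_mx _) (ortho m hmN E hE) (ortho n hnN Ab hAb) hGF.
  by rewrite -hGF adj_mul adj_adj.
set K := block_mx _ _ _ _ in hK.
have hKsa : adj_mx K = K by rewrite -hK adj_mul adj_adj.
have hKn : K *m adj_mx K = adj_mx K *m K by rewrite hKsa.
have hRn : rho *m adj_mx rho = adj_mx rho *m rho by rewrite hH.
set X := spectralmx K; set nu := spectral_diag K.
set V := spectralmx rho; set d := spectral_diag rho.
have hXu : X \is unitarymx := spectral_unitarymx K.
have hVu : V \is unitarymx := spectral_unitarymx rho.
have decK : K = adj_mx X *m diag_mx nu *m X := spectral_decomp hKn.
have decR : rho = adj_mx V *m diag_mx d *m V := spectral_decomp hRn.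
pose T := X *m W *m adj_mx V.
have hT : T *m adj_mx T = diag_mx nu.
  rewrite /T !adj_mul adj_adj !mulmxA -[_ *m adj_mx V *m V]mulmxA unitary_l //.
  rewrite mulmx1 -[X *m W *m adj_mx W]mulmxA hK decK !mulmxA unitary_r //.
  by rewrite mul1mx -mulmxA unitary_r // mulmx1.
have htrE : \tr (W *m rho *m adj_mx W) =
    \sum_i \sum_k (T i k * (T i k)^* ) * d 0 k.
  have e1 : T *m diag_mx d *m adj_mx T = X *m (W *m rho *m adj_mx W) *m adj_mx X.
    by rewrite /T decR !adj_mul adj_adj !mulmxA.
  have e2 : \tr (W *m rho *m adj_mx W) = \tr (T *m diag_mx d *m adj_mx T).
    by rewrite e1 [RHS]mxtrace_mulC !mulmxA unitary_l // mul1mx.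
  rewrite e2 /mxtrace; apply: eq_bigr => i _; rewrite mxE.
  apply: eq_bigr => k _; rewrite mul_mx_diag !mxE; ring.
clearbody T.
have hnu_row : forall i, \sum_k T i k * (T i k)^* = nu 0 i.
  move=> i; have := congr1 (fun M : 'M[C]_(m + n) => M i i) hT.
  rewrite /= !mxE eqxx mulr1n => <-; apply: eq_bigr => k _; by rewrite !mxE.
have hnu_ge0 : forall i, 0 <= nu 0 i.
  by move=> i; rewrite -hnu_row; apply: sumr_ge0 => k _; exact: mul_conjC_ge0.
have hd_ge0 : forall k, 0 <= d 0 k.
  have hVR : V *m rho *m adj_mx V = diag_mx d.
    rewrite decR !mulmxA unitary_r // mul1mx -mulmxA unitary_r //.
    by rewrite mulmx1.
  move=> k; have := congr1 (fun M : 'M[C]_N => M k k) hVR.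
  rewrite /= [in RHS]mxE eqxx mulr1n => <-.
  have -> : (V *m rho *m adj_mx V) k k =
      braket (\row_l (V k l)^* ) rho (\row_l (V k l)^* ).
    rewrite /braket !mxE; apply: eq_bigr => j _; rewrite !mxE.
    congr (_ * _); apply: eq_bigr => l _; by rewrite !mxE conjCK.
  exact: hpsd.
pose S := fun i k => T i k * (T i k)^* / nu 0 i.
have e3 : \sum_i \sum_k T i k * (T i k)^* * d 0 k =
    \sum_i \sum_k nu 0 i * S i k * d 0 k.
  apply: eq_bigr => i _; case: (eqVneq (nu 0 i) 0) => h.
    have hz : forall k, T i k * (T i k)^* = 0.
      move=> k; have := hnu_row i; rewrite h => /psumr_eq0P; apply => //.
      by move=> l _; exact: mul_conjC_ge0.
    by apply: eq_bigr => k _; rewrite hz h !mul0r.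
  by apply: eq_bigr => k _; rewrite /S mulrCA mulfV // mulr1.
rewrite step1 htrE e3 sdotC.
have pmu : perm_eq mu [seq nu 0 i | i <- enum 'I_(m + n)].
  have := spec_perm hKn; apply; exact: (cp_K sig hsv.2).
have plam : perm_eq [seq lam i | i <- enum 'I_N] [seq d 0 i | i <- enum 'I_N].
  have := spec_perm hRn; apply; rewrite hlam; by rewrite big_map big_enum.
have tot : {in Num.real &, total (fun x y : C => y <= x)}.
  by move=> x y hx hy; rewrite orbC; apply: real_leVge.
have allr : forall s M (f : 'I_M -> C), (forall i, 0 <= f i) ->
    perm_eq s [seq f i | i <- enum 'I_M] -> all (fun x => x \is Num.real) s.
  move=> s0 M f hf hp; rewrite (perm_all _ hp); apply/allP => x /mapP [i _ ->].
  exact: ger0_real.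
apply: (@core C _ _ (fun i => nu 0 i) (fun k => d 0 k) S) => //.
- move=> i k; apply: mulr_ge0; [exact: mul_conjC_ge0 | by rewrite invr_ge0].
- move=> i; rewrite -mulr_suml hnu_row; case: (eqVneq (nu 0 i) 0) => h.
    by rewrite h mul0r ler01.
  by rewrite mulfV.
- move=> k.
  pose Dinv := diag_mx (\row_i (nu 0 i)^-1 : 'rV[C]_(m + n)).
  pose P := adj_mx T *m Dinv *m T.
  have hPk : P k k = \sum_i S i k.
    rewrite /P mxE; apply: eq_bigr => i _; rewrite mul_mx_diag !mxE /S; ring.
  have eD : Dinv *m diag_mx nu *m Dinv = Dinv.
    rewrite !mulmx_diag; congr diag_mx; apply/rowP => j; rewrite !mxE.
    case: (eqVneq (nu 0 j) 0) => h; first by rewrite h invr0 !mul0r.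
    by rewrite mulVf // mul1r.
  have hP2 : P *m P = P.
    have -> : P *m P = adj_mx T *m (Dinv *m (T *m adj_mx T) *m Dinv) *m T.
      by rewrite /P !mulmxA.
    by rewrite hT eD.
  have hDadj : adj_mx Dinv = Dinv.
    apply/matrixP => i j; rewrite !mxE; case: (eqVneq i j) => [->|h].
      by rewrite !mulr1n; apply/CrealP; rewrite realV ger0_real.
    by rewrite !mulr0n conjC0.
  have hPadj : adj_mx P = P by rewrite /P !adj_mul adj_adj hDadj mulmxA.
  clearbody P.
  have hPh : forall j, P j k = (P k j)^*.
    by move=> j; rewrite -{1}hPadj /adj_mx !mxE.
  have hx0 : 0 <= P k k.
    by rewrite hPk; apply: sumr_ge0 => i _; apply: mulr_ge0;
      [exact: mul_conjC_ge0 | rewrite invr_ge0].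
  have hx2 : P k k * P k k <= P k k.
    rewrite [X in _ <= X](_ : P k k = (P *m P) k k); last by rewrite hP2.
    rewrite mxE (bigD1 k) //= -[X in X <= _]addr0; apply: lerD => //.
    by apply: sumr_ge0 => j _; rewrite hPh; exact: mul_conjC_ge0.
  rewrite -hPk; case: (eqVneq (P k k) 0) => [->|hx]; first exact: ler01.
  have xpos : 0 < P k k by rewrite lt_def hx hx0.
  by rewrite -(ler_pM2l xpos) mulr1.
- by rewrite /decr perm_sort.
- exact: (sort_sorted_in tot (allr _ _ _ hnu_ge0 pmu)).
- by rewrite /decr perm_sort.
- apply: (sort_sorted_in tot); exact: (allr _ _ _ hd_ge0 plam).
Qed.
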